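(* Let $r \ge 1$ and $s \le r$. For $1 \le j \le r$ and $d \ge 0$, let $e^d_{r,j}$ be the elementary symmetric polynomial of degree $d$ in the $r-1$ variables $x_1,\dots,x_r$ with $x_j$ omitted. Let $A_r^s(x_1,\dots,x_r)$ be the $s \times r$ matrix whose $(d+1, j)$ entry is $e^d_{r,j}$ for $0 \le d \le s-1$, $1 \le j \le r$. For $1 \le i_1 < i_2 < \cdots < i_s \le r$, let $B_{i_1,\dots,i_s}$ be the $s \times s$ submatrix of $A_r^s$ consisting of columns $i_1,\dots,i_s$. Then, as polynomials in $x_1,\dots,x_r$, \[ \det B_{i_1,\dots,i_s}(x_1,\dots,x_r) = \prod_{1 \le \alpha < \beta \le s} (x_{i_\alpha} - x_{i_\beta}). \] *)

(* Defs.v *)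
From HB Require Import structures.
From mathcomp Require Import all_boot all_algebra.
From mathcomp Require Import mpoly.
Set Implicit Arguments. Unset Strict Implicit. Unset Printing Implicit Defensive.
Import GRing.Theory.
Local Open Scope ring_scope.

Definition esym_omit (R : comRingType) (r : nat) (d : nat) (j : 'I_r) : {mpoly R[r]} :=
  \sum_(h : {set 'I_r} | (#|h| == d) && (j \notin h)) \prod_(i in h) 'X_i.

Definition Amx (R : comRingType) (r s : nat) : 'M[{mpoly R[r]}]_(s, r) :=
  \matrix_(d < s, j < r) esym_omit R d j.

(* Main.v *)
Require Import Defs.
From HB Require Import structures.
From mathcomp Require Import all_boot all_algebra.
From mathcomp Require Import mpoly.
Import GRing.Theory.
Local Open Scope ring_scope.

Definition eall (R : comRingType) (r : nat) (d : nat) : {mpoly R[r]} :=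
  \sum_(h : {set 'I_r} | #|h| == d) \prod_(i in h) 'X_i.

Lemma eall_split (R : comRingType) r m (j : 'I_r) :
  eall R r m.+1 = esym_omit R m.+1 j + 'X_j * esym_omit R m j.
Proof.
rewrite /eall /esym_omit (bigID (fun h : {set 'I_r} => j \in h)) /= addrC; congr (_ + _).
rewrite big_distrr /=.
rewrite (reindex_onto (fun h => j |: h) (fun h => h :\ j)); last first.
  by move=> h /andP[_ jh]; rewrite setD1K.
apply: eq_big => h.
  case jh: (j \in h).
    rewrite andbF; apply/negbTE; rewrite negb_and; apply/orP; right.
    apply/eqP => E; move: (setD11 j (j |: h)); rewrite E jh //.
  by rewrite setU11 setU1K ?jh // eqxx !andbT cardsU1 jh add1n eqSS.
move=> /andP[] /andP[_ _] /eqP E.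
case jh: (j \in h).
  by move: (setD11 j (j |: h)); rewrite E jh.
by rewrite big_setU1 ?jh.
Qed.

Lemma eall0 (R : comRingType) r : eall R r 0 = 1.
Proof.
rewrite /eall (big_pred1 set0) ?big_set0 // => h; by rewrite cards_eq0.
Qed.

Lemma omit0 (R : comRingType) r (j : 'I_r) : esym_omit R 0 j = 1.
Proof.
rewrite /esym_omit (big_pred1 set0) ?big_set0 // => h.
rewrite cards_eq0; apply/idP/idP => [/andP[/eqP-> _]|/eqP->] //=; by rewrite ?eqxx ?in_set0.
Qed.

Lemma omit_expand (R : comRingType) r (j : 'I_r) d :
  esym_omit R d j = \sum_(k < d.+1) eall R r (d - k) * (- 'X_j) ^+ k.
Proof.
elim: d => [|d IH].
  by rewrite big_ord1 omit0 eall0 expr0 mulr1.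
have -> : esym_omit R d.+1 j = eall R r d.+1 - 'X_j * esym_omit R d j.
  by rewrite (eall_split _ _ _ j) addrK.
rewrite IH [RHS]big_ord_recl subn0 expr0 mulr1 mulr_sumr -sumrN; congr (_ + _).
apply: eq_bigr => k _; rewrite lift0 subSS exprS.
by rewrite mulrCA mulNr mulrN.
Qed.

Theorem lemma2p2 (R : comRingType) (r s : nat) (hr : (1 <= r)%N) (hs : (s <= r)%N)
    (i : 'I_s -> 'I_r) (hi : forall a b : 'I_s, (a < b)%N -> (i a < i b)%N) :
  \det (colsub i (Amx R r s)) =
  \prod_(a < s) \prod_(b < s | (a < b)%N) ('X_(i a) - 'X_(i b)).
Proof.
pose L : 'M[{mpoly R[r]}]_s := \matrix_(d < s, k < s) (if (k <= d)%N then eall R r (d - k) else 0).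
pose a : 'rV[{mpoly R[r]}]_s := \row_(b < s) (- 'X_(i b)).
have -> : colsub i (Amx R r s) = L *m Vandermonde s a.
  apply/matrixP => d b; rewrite !mxE omit_expand.
  rewrite (big_ord_widen s (fun k => eall R r (d - k) * (- 'X_(i b)) ^+ k) (ltn_ord d)).
  rewrite big_mkcond /=; apply: eq_bigr => k _.
  rewrite !mxE ltnS; case: ifP => _; last by rewrite mul0r.
  by [].
rewrite det_mulmx det_Vandermonde det_trig; last first.
  by apply/is_trig_mxP => d k dk; rewrite mxE leqNgt dk.
rewrite big1 ?mul1r; last by move=> d _; rewrite mxE leqnn subnn eall0.
apply: eq_bigr => x _; apply: eq_bigr => y _.
by rewrite !mxE opprK addrC.
Qed.
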